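(* Let $K>0$, let $\eta:[0,K]\to\mathbb{R}$ be a speed-density relation, let $T>0$, and let $k_0\in(0,K]$ be a density at which $\eta$ is differentiable; set $v_0=\eta(k_0)$. Consider Phillips' model $$k_t+(kv)_x=0,\qquad v_t+v v_x=\frac{\eta(k)-v}{T},$$ linearized about the equilibrium $(k_0,v_0)$, i.e. the linear system for perturbations $\kappa(t,x),\nu(t,x)$: $$\kappa_t+v_0\kappa_x+k_0\nu_x=0,\qquad \nu_t+v_0\nu_x=\frac{\eta'(k_0)\kappa-\nu}{T}.$$ Call this linearized system linearly stable if for every real $m\neq 0$ and every complex $\omega$ for which the system admits a solution $(\kappa,\nu)=(a,b)e^{i(mx-\omega t)}$ with $(a,b)\in\mathbb{C}^2\setminus\{(0,0)\}$, one has $\operatorname{Im}\omega<0$. Then the linearized system is not linearly stable (Phillips' model is linearly unstable): there exist a real $m\neq 0$, a complex $\omega$ with $\operatorname{Im}\omega\ge 0$, and $(a,b)\neq(0,0)$ such that $(a,b)e^{i(mx-\omega t)}$ solves the linearized system.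
   Context: $k(t,x)$ is traffic density, $v(t,x)$ is traffic speed, $K$ is the jam density, and $T$ is the relaxation time. *)

(* Defs.v *)
From Stdlib Require Import Reals.
From Coquelicot Require Import Coquelicot.
Open Scope R_scope.

Definition cexp (z : C) : C :=
  (RtoC (exp (Re z)) * (cos (Im z), sin (Im z)))%C.

Definition Ci : C := (0, 1).

Definition plane_wave (c : C) (m : R) (omega : C) (t x : R) : C :=
  (c * cexp (Ci * (RtoC m * RtoC x - omega * RtoC t)))%C.

Definition deriv_on_dom (eta : R -> R) (K k0 d : R) : Prop :=
  filterlim (fun k => (eta k - eta k0) / (k - k0))
    (within (fun k => 0 <= k <= K /\ k <> k0) (locally k0)) (locally d).

(* Partial derivatives are those of complex-valued functions of real
   variables (C viewed as a normed R-module). *)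
Definition solves_linearized (k0 v0 d T : R) (kappa nu : R -> R -> C) : Prop :=
  exists kt kx nt nx : R -> R -> C,
    (forall t x,
       is_derive (fun s => kappa s x) t (kt t x) /\
       is_derive (fun y => kappa t y) x (kx t x) /\
       is_derive (fun s => nu s x) t (nt t x) /\
       is_derive (fun y => nu t y) x (nx t x)) /\
    (forall t x,
       (kt t x + RtoC v0 * kx t x + RtoC k0 * nx t x = 0)%C /\
       (nt t x + RtoC v0 * nx t x
         = (RtoC d * kappa t x - nu t x) / RtoC T)%C).

(* Main.v *)
Require Import Defs.
From Stdlib Require Import Reals.
From Coquelicot Require Import Coquelicot.
From Stdlib Require Import Lra.
Open Scope R_scope.

Lemma is_derive_C (f g : R -> R) x a b :
  is_derive f x a -> is_derive g x b ->
  @is_derive R_AbsRing C_R_NormedModule (fun y => (f y, g y)) x (a, b).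
Proof.
  intros Hf Hg.
  pose proof (is_derive_plus _ _ _ _ _ (is_derive_scal_l f x a ((1,0) : C_R_NormedModule) Hf)
              (is_derive_scal_l g x b ((0,1) : C_R_NormedModule) Hg)) as H.
  replace (a, b) with (@plus C_R_NormedModule (scal a ((1,0) : C_R_NormedModule)) (scal b ((0,1) : C_R_NormedModule))).
  - eapply is_derive_ext; [|exact H].
    intros y; simpl. unfold plus, scal; simpl. unfold prod_plus, prod_scal; simpl.
    unfold plus, scal, mult; simpl; unfold plus, scal, mult; simpl.
    f_equal; ring.
  - unfold plus, scal; simpl. unfold prod_plus, prod_scal; simpl.
    unfold plus, scal, mult; simpl; unfold plus, scal, mult; simpl.
    f_equal; ring.
Qed.

Definition pwE (c : C) m (w : C) t x : C :=
  (exp (Im w * t) * (Re c * cos (m*x - Re w*t) - Im c * sin (m*x - Re w*t)),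
   exp (Im w * t) * (Re c * sin (m*x - Re w*t) + Im c * cos (m*x - Re w*t))).

Lemma pw_eq c m w t x : plane_wave c m w t x = pwE c m w t x.
Proof.
  unfold plane_wave, cexp, pwE.
  destruct c, w; unfold Ci, Re, Im, RtoC, Cmult, Cminus, Cplus, Copp; simpl.
  repeat match goal with
  | |- context [exp ?a] => progress replace a with (r2 * t) by ring
  | |- context [cos ?a] => progress replace a with (m * x - r1 * t) by ring
  | |- context [sin ?a] => progress replace a with (m * x - r1 * t) by ring
  end.
  apply injective_projections; simpl; ring.
Qed.

Lemma dx_pw c m w t x :
  is_derive (fun y => plane_wave c m w t y) x (plane_wave c m w t x * (Ci * RtoC m))%C.
Proof.
  apply is_derive_ext with (f := fun y => pwE c m w t y).
  { intros; symmetry; apply pw_eq. }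
  rewrite pw_eq. unfold pwE.
  destruct c as [c1 c2], w as [w1 w2]; unfold Re, Im; simpl.
  unfold Cmult, Ci, RtoC; simpl.
  apply is_derive_C; auto_derive; auto; unfold Rminus; ring.
Qed.

Lemma dt_pw c m w t x :
  is_derive (fun s => plane_wave c m w s x) t (plane_wave c m w t x * (- Ci * w))%C.
Proof.
  apply is_derive_ext with (f := fun s => pwE c m w s x).
  { intros; symmetry; apply pw_eq. }
  rewrite pw_eq. unfold pwE.
  destruct c as [c1 c2], w as [w1 w2]; unfold Re, Im; simpl.
  unfold Cmult, Ci, RtoC, Copp; simpl.
  apply is_derive_C; auto_derive; auto; unfold Rminus; ring.
Qed.

Lemma solves_of k0 v0 d T a b m w : T <> 0 ->
 (a * (- Ci * w) + RtoC v0 * (a * (Ci * RtoC m)) + RtoC k0 * (b * (Ci * RtoC m)) = 0)%C ->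
 (b * (- Ci * w) + RtoC v0 * (b * (Ci * RtoC m)) = (RtoC d * a - b) / RtoC T)%C ->
 solves_linearized k0 v0 d T (plane_wave a m w) (plane_wave b m w).
Proof.
  intros HT H1 H2.
  assert (HT' : RtoC T <> 0%C) by (intro H; apply HT; injection H; auto).
  exists (fun t x => plane_wave a m w t x * (- Ci * w))%C,
         (fun t x => plane_wave a m w t x * (Ci * RtoC m))%C,
         (fun t x => plane_wave b m w t x * (- Ci * w))%C,
         (fun t x => plane_wave b m w t x * (Ci * RtoC m))%C.
  split.
  - intros t x; split; [apply dt_pw|split; [apply dx_pw|split; [apply dt_pw|apply dx_pw]]].
  - intros t x; unfold plane_wave.
    set (E := cexp _).
    split.
    + transitivity (E * (a * (- Ci * w) + RtoC v0 * (a * (Ci * RtoC m)) + RtoC k0 * (b * (Ci * RtoC m))))%C.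
      * ring.
      * rewrite H1; ring.
    + transitivity (E * (b * (- Ci * w) + RtoC v0 * (b * (Ci * RtoC m))))%C.
      * ring.
      * rewrite H2; field; auto.
Qed.


Theorem theorem2p2 (K T k0 : R) (eta : R -> R) (d : R) :
  0 < K -> 0 < T -> 0 < k0 <= K ->
  deriv_on_dom eta K k0 d ->
  exists (m : R) (omega : C) (a b : C),
    m <> 0 /\ 0 <= Im omega /\ (a <> RtoC 0 \/ b <> RtoC 0) /\
    solves_linearized k0 (eta k0) d T
      (plane_wave a m omega) (plane_wave b m omega).
Proof.
  intros HK HT Hk0 _.
  destruct (Req_dec d 0) as [Hd | Hd].
  - subst d. exists 1, (RtoC (eta k0)), (RtoC k0), (RtoC 0).
    split; [lra|]. split; [simpl; lra|]. split.
    + left; intro H; injection H; lra.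
    + apply solves_of; [lra| ring | ].
      assert (HT' : RtoC T <> 0%C) by (intro H; injection H; lra).
      field; auto.
  - set (m := 10 / (9 * T * d * k0)).
    assert (Hm : m <> 0).
    { unfold m. apply Rmult_integral_contrapositive_currified; [lra|].
      apply Rinv_neq_0_compat. repeat apply Rmult_integral_contrapositive_currified; lra. }
    exists m, ((((2/(3*T))%R, (1/(3*T))%R) : C) + RtoC (eta k0 * m))%C, (RtoC k0 * RtoC m)%C, (((2/(3*T))%R, (1/(3*T))%R) : C).
    split; [exact Hm|]. split.
    { simpl. assert (0 < 1/(3*T)) by (apply Rdiv_lt_0_compat; lra). lra. }
    split.
    { right. intro H. injection H. intros _ H'. assert (0 < 1/(3*T)) by (apply Rdiv_lt_0_compat; lra). lra. }
    apply solves_of; [lra| |].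
    + rewrite RtoC_mult. ring.
    + unfold Cdiv, Cinv, Cmult, Cplus, Cminus, Copp, RtoC, Ci; simpl.
      apply injective_projections; simpl; unfold m; field; repeat split; lra.
Qed.
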